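(* Let $H$ be a Hilbert space, $(Y,\|\cdot\|_Y)$ a Banach space, $f:H\to Y$ locally Lipschitz, and $K\subset H$ compact. Then there exist $n_0\in\mathbb{N}$ and a constant $c(f,K)\ge0$ such that for every $n\ge n_0$ there is an $n$-dimensional linear subspace $E_n\subset H$ with $$\sup_{x\in K}\|f(x)-f(\pi_{E_n}(x))\|_Y\le c(f,K)\,\Omega_n(K,H),$$ where $\pi_{E_n}$ is the orthogonal projection onto $E_n$.
   Context: The Kolmogorov $n$-width is $\Omega_n(K,H)=\inf_{\dim E=n}\sup_{u\in K}\inf_{v\in E}\|u-v\|$, the infimum over $n$-dimensional linear subspaces $E\subset H$. *)

(* Defs.v *)
From HB Require Import structures.
From mathcomp Require Import all_boot all_order all_algebra.
From mathcomp Require Import all_classical all_reals all_analysis.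
Set Implicit Arguments. Unset Strict Implicit. Unset Printing Implicit Defensive.
Import Order.TTheory GRing.Theory Num.Theory.
Import numFieldNormedType.Exports.
Local Open Scope classical_set_scope.
Local Open Scope ring_scope.

Section Defs.
Context {R : realType} {V : normedModType R}.

Definition inner_product_of_norm (ip : V -> V -> R) : Prop :=
  [/\ forall x y, ip x y = ip y x,
      forall a x y z, ip (a *: x + y) z = a * ip x z + ip y z
    & forall x, ip x x = `|x| ^+ 2].

Definition span (n : nat) (e : 'I_n -> V) : set V :=
  [set \sum_(i < n) c i *: e i | c in [set: 'I_n -> R]].

Definition lin_indep (n : nat) (e : 'I_n -> V) : Prop :=
  forall c : 'I_n -> R, \sum_(i < n) c i *: e i = 0 -> forall i, c i = 0.

Definition subspace_dim (n : nat) (E : set V) : Prop :=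
  exists e : 'I_n -> V, lin_indep e /\ E = span e.

(* orthogonal projection onto E (w.r.t. ip): the point y of E with x - y
   orthogonal to E (unique and existing when E is finite dimensional) *)
Definition orth_proj (ip : V -> V -> R) (E : set V) (x : V) : V :=
  xget 0 [set y | E y /\ forall z, E z -> ip (x - y) z = 0].

Definition kolmogorov_width (n : nat) (K : set V) : \bar R :=
  ereal_inf [set ereal_sup [set ereal_inf [set (`|u - v|)%:E | v in E]
                                | u in K]
            | E in [set E | subspace_dim n E]].

End Defs.

Definition locally_lipschitz {R : realType} {V W : normedModType R}
  (f : V -> W) : Prop :=
  forall x : V, exists r : R, 0 < r /\ exists L : R,
    forall y z, ball x r y -> ball x r z -> `|f y - f z| <= L * `|y - z|.

(* Main.v *)
From Pilot Require Import Defs.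
From HB Require Import structures.
From mathcomp Require Import all_boot all_order all_algebra.
From mathcomp Require Import all_classical all_reals all_analysis.
From mathcomp Require Import ring lra.
From mathcomp Require finmap.
Import Order.TTheory GRing.Theory Num.Theory.
Import numFieldNormedType.Exports.
Local Open Scope classical_set_scope.
Local Open Scope ring_scope.

Set Implicit Arguments. Unset Strict Implicit. Unset Printing Implicit Defensive.
Notation dspan := Pilot.Defs.span.
Section LinAlg.
Context {R : realType} {H : normedModType R}.

Lemma span0 n (e : 'I_n -> H) : dspan e 0.
Proof. exists (fun _ => 0) => //; rewrite big1 // => i _; exact: scale0r. Qed.

Lemma span_lin n (e : 'I_n -> H) a x y : dspan e x -> dspan e y -> dspan e (a *: x + y).
Proof.
move=> [c _ <-] [d _ <-]; exists (fun i => a * c i + d i) => //.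
rewrite scaler_sumr -big_split /=; apply: eq_bigr => i _.
by rewrite scalerDl scalerA.
Qed.

Lemma span_e n (e : 'I_n -> H) i : dspan e (e i).
Proof.
exists (fun j => if j == i then 1 else 0) => //.
rewrite (bigD1 i) //= eqxx scale1r big1 ?addr0 // => j /negbTE ->; exact: scale0r.
Qed.

Lemma span_sum n (e : 'I_n -> H) m (c : 'I_m -> R) (v : 'I_m -> H) :
  (forall i, dspan e (v i)) -> dspan e (\sum_(i < m) c i *: v i).
Proof.
move=> hv; elim/big_rec: _ => [|i y _ hy]; first exact: span0.
exact: span_lin.
Qed.

Lemma span_sub n (e : 'I_n -> H) m (v : 'I_m -> H) :
  (forall i, dspan e (v i)) -> dspan v `<=` dspan e.
Proof. move=> hv x [c _ <-]; exact: span_sum. Qed.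

Lemma steinitz N j (u : 'I_N -> H) (v : 'I_j -> H) :
  lin_indep u -> (forall i, dspan v (u i)) -> (N <= j)%N.
Proof.
move=> hu hv.
have [C hC] : {C : 'I_N -> 'I_j -> R & forall i, u i = \sum_(l < j) C i l *: v l}.
  apply: (@choice _ _ (fun i c => u i = \sum_(l < j) c l *: v l)) => i.
  by have [c _ <-] := hv i; exists c.
pose M : 'M[R]_(N, j) := \matrix_(i, l) C i l.
have rf : row_free M.
  apply: inj_row_free => c hc.
  have h0 : \sum_(i < N) c 0 i *: u i = 0.
    rewrite (eq_bigr (fun i => \sum_(l < j) (c 0 i * C i l) *: v l)); last first.
      by move=> i _; rewrite hC scaler_sumr; apply: eq_bigr => l _; rewrite scalerA.
    rewrite exchange_big /= big1 // => l _.
    rewrite -scaler_suml.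
    have : (c *m M) 0 l = 0 by rewrite hc mxE.
    rewrite mxE => e; rewrite (eq_bigr (fun i => c 0 i * M i l)) ?e ?scale0r //.
    by move=> i _; rewrite mxE.
  apply/matrixP => a b; rewrite ord1 mxE; exact: hu h0 b.
by rewrite -row_leq_rank in rf; exact: leq_trans rf (rank_leq_col M).
Qed.

Definition app j (b : 'I_j -> H) (w : H) : 'I_j.+1 -> H :=
  fun i => if unlift ord_max i is Some k then b k else w.

Lemma app_wid j (b : 'I_j -> H) w i : app b w (widen_ord (leqnSn j) i) = b i.
Proof.
have -> : widen_ord (leqnSn j) i = lift ord_max i by apply: val_inj; rewrite [RHS]lift_max.
by rewrite /app liftK.
Qed.

Lemma app_max j (b : 'I_j -> H) w : app b w ord_max = w.
Proof. by rewrite /app unlift_none. Qed.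

Lemma ord_caseS j (i : 'I_j.+1) :
  i = ord_max \/ exists k : 'I_j, i = widen_ord (leqnSn j) k.
Proof.
case: (ltnP i j) => h.
  by right; exists (Ordinal h); apply: val_inj.
left; apply: val_inj => /=; have := ltn_ord i; rewrite ltnS => h2.
by apply/eqP; rewrite eqn_leq h2 h.
Qed.

Lemma app_indep j (b : 'I_j -> H) w :
  lin_indep b -> ~ dspan b w -> lin_indep (app b w).
Proof.
move=> hb hw c; rewrite big_ord_recr /= app_max.
under eq_bigr do rewrite app_wid.
move=> h.
have cm : c ord_max = 0.
  apply/eqP; apply: contraT => hc; exfalso; apply: hw.
  set S := \sum_(i < j) c (widen_ord (leqnSn j) i) *: b i in h *.
  have e1 : c ord_max *: w = - S by apply/eqP; rewrite -addr_eq0 addrC h.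
  have -> : w = (- (c ord_max)^-1) *: S + 0.
    by rewrite addr0 scaleNr -scalerN -e1 scalerA mulVf // scale1r.
  apply: span_lin; [exact: span_sum (span_e b) | exact: span0].
rewrite cm scale0r addr0 in h.
move=> i; case: (ord_caseS i) => [->|[k ->]] //; exact: hb h k.
Qed.

Lemma app_span j (b : 'I_j -> H) w : dspan b `<=` dspan (app b w).
Proof. apply: span_sub => i; rewrite -(app_wid b w); exact: span_e. Qed.

Lemma ext1 m (v : 'I_m -> H) :
  exists j (b : 'I_j -> H), [/\ (j <= m)%N, lin_indep b & forall i, dspan b (v i)].
Proof.
elim: m v => [|m IH] v.
  exists 0%N, (fun _ => 0); split => //; first by move=> c _ [].
  by case.
have [j [b [hj hb hs]]] := IH (fun i => v (widen_ord (leqnSn m) i)).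
case: (pselect (dspan b (v ord_max))) => hm.
  exists j, b; split => //; first exact: leqW.
  by move=> i; case: (ord_caseS i) => [->|[k ->]].
exists j.+1, (app b (v ord_max)); split => //; first exact: app_indep.
move=> i; case: (ord_caseS i) => [->|[k ->]].
  by have := span_e (app b (v ord_max)) ord_max; rewrite app_max.
exact: app_span.
Qed.

Lemma ext2 (hdim : forall n : nat, exists E : set H, subspace_dim n E) k :
  forall j (b : 'I_j -> H), lin_indep b ->
  exists E, subspace_dim (j + k) E /\ dspan b `<=` E.
Proof.
elim: k => [|k IH] j b hb.
  by exists (dspan b); rewrite addn0; split => //; exists b.
have [F [e [he _]]] := hdim j.+1.
have [i hi] : exists i, ~ dspan b (e i).
  apply/existsNP => hall.
  by have := steinitz he hall; rewrite ltnn.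
have [E [hE hsub]] := IH _ _ (app_indep hb hi).
exists E; rewrite -addSnnS; split => //.
by move=> x /(app_span (e i)) /hsub.
Qed.

Lemma ext (hdim : forall n : nat, exists E : set H, subspace_dim n E) m (v : 'I_m -> H) n :
  (m <= n)%N -> exists E, subspace_dim n E /\ dspan v `<=` E.
Proof.
move=> mn; have [j [b [hj hb hs]]] := ext1 v.
have [E [hE hsub]] := ext2 hdim (n - j) hb.
rewrite subnKC in hE; last exact: leq_trans hj mn.
by exists E; split => // x /(span_sub hs) /hsub.
Qed.

End LinAlg.

Section IP.
Context {R : realType} {H : normedModType R} (ip : H -> H -> R)
  (hip : inner_product_of_norm ip).

Lemma ipC x y : ip x y = ip y x. Proof. by case: hip. Qed.
Lemma ipL a x y z : ip (a *: x + y) z = a * ip x z + ip y z.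
Proof. by case: hip. Qed.
Lemma ipxx x : ip x x = `|x| ^+ 2. Proof. by case: hip. Qed.
Lemma ipD x y z : ip (x + y) z = ip x z + ip y z.
Proof. by rewrite -[x]scale1r ipL mul1r scale1r. Qed.
Lemma ip0 z : ip 0 z = 0.
Proof. have := ipD 0 0 z; rewrite addr0; lra. Qed.
Lemma ipZ a x z : ip (a *: x) z = a * ip x z.
Proof. by rewrite -[a *: x]addr0 ipL ip0 addr0. Qed.
Lemma ipN x z : ip (- x) z = - ip x z.
Proof. by rewrite -scaleN1r ipZ mulN1r. Qed.
Lemma ipB x y z : ip (x - y) z = ip x z - ip y z.
Proof. by rewrite ipD ipN. Qed.
Lemma ipDr x y z : ip z (x + y) = ip z x + ip z y.
Proof. by rewrite ipC ipD ![ip _ z]ipC. Qed.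
Lemma ipZr a x z : ip z (a *: x) = a * ip z x.
Proof. by rewrite ipC ipZ ipC. Qed.
Lemma ip0r z : ip z 0 = 0.
Proof. by rewrite ipC ip0. Qed.
Lemma ipNr x z : ip z (- x) = - ip z x.
Proof. by rewrite ipC ipN ipC. Qed.
Lemma ipBr x y z : ip z (x - y) = ip z x - ip z y.
Proof. by rewrite ipDr ipNr. Qed.
Lemma ip_sumr n (F : 'I_n -> H) z : ip z (\sum_(i < n) F i) = \sum_(i < n) ip z (F i).
Proof.
elim/big_rec2: _ => [|i y1 y2 _ <-]; first by rewrite ip0r.
by rewrite ipDr.
Qed.
Lemma ip_suml n (F : 'I_n -> H) z : ip (\sum_(i < n) F i) z = \sum_(i < n) ip (F i) z.
Proof. rewrite ipC ip_sumr; apply: eq_bigr => i _; exact: ipC. Qed.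
Lemma ipxx0 x : ip x x = 0 -> x = 0.
Proof. by rewrite ipxx => /eqP; rewrite sqrf_eq0 normr_eq0 => /eqP. Qed.

Lemma norm2D x y : `|x + y| ^+ 2 = `|x| ^+ 2 + 2 * ip x y + `|y| ^+ 2.
Proof. rewrite -!ipxx ipD !ipDr [ip y x]ipC; lra. Qed.

Lemma cauchy_schwarz x y : ip x y <= `|x| * `|y|.
Proof.
have e1 := norm2D x y.
have e2 := norm2D x (- y).
rewrite ipNr normrN in e2.
have h1 : `|x + y| <= `|x| + `|y| by apply: ler_normD.
have h2 : `|x| - `|y| <= `|x - y|.
  have := ler_normD (x - y) y; rewrite subrK; lra.
have h3 : `|y| - `|x| <= `|x - y|.
  have := ler_normD (y - x) x; rewrite subrK distrC; lra.
have n1 : 0 <= `|x + y| by [].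
have n2 : 0 <= `|x - y| by [].
have nx : 0 <= `|x| by [].
have ny : 0 <= `|y| by [].
have s1 : `|x + y| ^+ 2 <= (`|x| + `|y|) ^+ 2 by rewrite ler_pXn2r // ?nnegrE; lra.
have s2 : (`|x| - `|y|) ^+ 2 <= `|x - y| ^+ 2 by nra.
nra.
Qed.

Lemma abs_ip x y : `|ip x y| <= `|x| * `|y|.
Proof.
case: (lerP 0 (ip x y)) => h; first by rewrite ger0_norm //; exact: cauchy_schwarz.
rewrite ltr0_norm // -ipNr -[`|y|]normrN; exact: cauchy_schwarz.
Qed.

Definition wid n (e : 'I_n.+1 -> H) : 'I_n -> H := fun i => e (widen_ord (leqnSn n) i).

Lemma span_recr n (e : 'I_n.+1 -> H) z :
  dspan e z <-> exists z' a, dspan (wid e) z' /\ z = z' + a *: e ord_max.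
Proof.
split.
  move=> [c _ <-]; rewrite big_ord_recr /=.
  by exists (\sum_(i < n) c (widen_ord (leqnSn n) i) *: e (widen_ord (leqnSn n) i)),
    (c ord_max); split => //; exists (fun i => c (widen_ord (leqnSn n) i)).
move=> [z' [a [hz' ->]]]; rewrite addrC; apply: span_lin; first exact: span_e.
apply: span_sub hz' => i; exact: span_e.
Qed.

Lemma proj_exists n (e : 'I_n -> H) x :
  exists y, dspan e y /\ forall z, dspan e z -> ip (x - y) z = 0.
Proof.
elim: n e x => [|n IH] e x.
  exists 0; split; first exact: span0.
  by move=> z [c _ <-]; rewrite big_ord0 ip0r.
have [p [hp pp]] := IH (wid e) x.
have [q [hq pq]] := IH (wid e) (e ord_max).
set w := e ord_max - q.
have spw : forall z, dspan e z -> ip (x - p) z = 0 -> ip w z = 0 -> ip ((x - p) - (ip (x - p) w / ip w w) *: w) z = 0.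
  by move=> z _ h1 h2; rewrite ipB ipZ h1 h2 mulr0 subr0.
have hwid : forall z, dspan (wid e) z -> dspan e z.
  apply: span_sub => i; exact: span_e.
case: (eqVneq (ip w w) 0) => hw.
  have w0 : w = 0 by apply: ipxx0.
  exists p; split; first exact: hwid.
  move=> z /span_recr [z' [a [hz' ->]]].
  have -> : e ord_max = q by apply/eqP; rewrite -subr_eq0 -/w w0.
  by rewrite ipDr ipZr !pp // mulr0 addr0.
exists (p + (ip (x - p) w / ip w w) *: w); split.
  rewrite addrC; apply: span_lin; last exact: hwid.
  rewrite /w addrC -scaleN1r; apply: span_lin; [exact: hwid | exact: span_e].
move=> z /span_recr [z' [a [hz' ->]]].
have hwz : ip w z' = 0 by rewrite pq.
rewrite opprD addrA ipDr ipZr.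
have -> : e ord_max = w + q by rewrite /w subrK.
rewrite ipDr !(ipB (x - p)) !ipZ pp // hwz mulr0 subr0 add0r.
have -> : ip (x - p) q = 0 by rewrite pp.
have -> : ip w q = 0 by rewrite /w pq.
rewrite mulr0 !subr0 addr0 mulfVK // subrr mulr0 //.
Qed.

Lemma proj_spec n (e : 'I_n -> H) x :
  dspan e (orth_proj ip (dspan e) x) /\
  forall z, dspan e z -> ip (x - orth_proj ip (dspan e) x) z = 0.
Proof.
rewrite /orth_proj; apply: (xgetPex 0 (P := [set y | dspan e y /\ _])).
exact: proj_exists.
Qed.

Lemma proj_min n (e : 'I_n -> H) x y v :
  dspan e y -> (forall z, dspan e z -> ip (x - y) z = 0) ->
  dspan e v -> `|x - y| <= `|x - v|.
Proof.
move=> hy hp hv.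
have hyv : dspan e (y - v) by rewrite addrC -scaleN1r; apply: span_lin.
have := norm2D (x - y) (y - v).
rewrite hp // mulr0 addr0 addrA subrK => h.
have n1 : 0 <= `|x - y| by [].
have n2 : 0 <= `|x - v| by [].
have n3 : 0 <= `|y - v| ^+ 2 by rewrite exprn_ge0.
nra.
Qed.

Lemma dist_eq n (e : 'I_n -> H) x :
  ereal_inf [set (`|x - v|)%:E | v in dspan e] = (`|x - orth_proj ip (dspan e) x|)%:E.
Proof.
have [h1 h2] := proj_spec e x.
apply/eqP; rewrite eq_le; apply/andP; split.
  by apply: ereal_inf_lbound; exists (orth_proj ip (dspan e) x).
apply: le_ereal_inf_tmp => _ [v hv <-]; rewrite lee_fin; exact: (proj_min h1 h2 hv).
Qed.

Lemma indep_not_span N (u : 'I_N.+1 -> H) (i : 'I_N.+1) :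
  lin_indep u -> ~ dspan (fun k : 'I_N => u (lift i k)) (u i).
Proof.
move=> hu [c _ hc].
pose d j := if unlift i j is Some k then c k else -1.
have : \sum_(j < N.+1) d j *: u j = 0.
  rewrite (bigD1_ord i) //= /d unlift_none.
  under eq_bigr do rewrite liftK.
  by rewrite hc scaleN1r addNr.
move/hu => /(_ i); rewrite /d unlift_none => /eqP; rewrite oppr_eq0 oner_eq0.
by [].
Qed.

Lemma biorth N (u : 'I_N.+1 -> H) : lin_indep u ->
  forall i, exists w, ip (u i) w = 1 /\ forall j, j != i -> ip (u j) w = 0.
Proof.
move=> hu i.
have [y [hy hp]] := proj_exists (fun k : 'I_N => u (lift i k)) (u i).
set r := u i - y.
have hr : ip r r != 0.
  apply/eqP => /ipxx0 /eqP; rewrite subr_eq0 => /eqP ei.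
  by move: (@indep_not_span _ u i hu); rewrite ei.
exists ((ip r r)^-1 *: r); split.
  rewrite ipZr.
  have -> : ip (u i) r = ip r r.
    have e1 : ip r r = ip (u i) r - ip y r by rewrite {1}/r ipB.
    have e2 : ip y r = 0 by rewrite ipC hp.
    by rewrite e1 e2 subr0.
  by rewrite mulVf.
move=> j hj; have hj2 : i != j by rewrite eq_sym.
have [k -> _] := unlift_some hj2.
rewrite ipZr (ipC (u (lift i k))) (hp (u (lift i k))) ?mulr0 //; exact: (span_e (fun k0 : 'I_N => u (lift i k0)) k).
Qed.

Lemma lower_bound N (u : 'I_N.+1 -> H) : lin_indep u ->
  exists eta : R, 0 < eta /\ forall e : 'I_N -> H,
    exists i, forall v, dspan e v -> eta <= `|u i - v|.
Proof.
move=> hu.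
have [W hW] := choice (biorth hu).
set Ws := \sum_(i < N.+1) `|W i|.
have Ws0 : 0 <= Ws by apply: sumr_ge0.
set t : R := N.+1%:R.
have t0 : 0 < t by rewrite /t ltr0n.
have t1 : t = 1 + N%:R by rewrite /t -addn1 natrD addrC.
set eta := (2 * (Ws + 1) * t)^-1.
have eta0 : 0 < eta by rewrite /eta invr_gt0; apply: mulr_gt0 => //; apply: mulr_gt0 => //; lra.
have etat : eta * t * Ws + eta * t = 1 / 2.
  rewrite /eta; field.
  apply/andP; split; [rewrite -t1; exact: lt0r_neq0 | rewrite lt0r_neq0 //; lra].
exists eta; split => // e.
have [P hP] := choice (fun i => proj_exists e (u i)).
case: (pselect (exists i, eta <= `|u i - P i|)) => [[i hi] | hn].
  exists i => v hv; apply: le_trans hi _; exact: proj_min (hP i).1 (hP i).2 hv.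
exfalso.
have hlt : forall i, `|u i - P i| <= eta.
  move=> i; apply: ltW; rewrite ltNge; apply/negP => h; apply: hn; by exists i.
have hdep : ~ lin_indep P.
  move=> hP'; have := steinitz hP' (fun i => (hP i).1); by rewrite ltnn.
move: hdep; rewrite /lin_indep => /existsNP [a /not_implyP [ha /existsNP [i0 hi0]]].
set S := \sum_(i < N.+1) `|a i|.
set Se := \sum_(j < N.+1) `|u j - P j|.
have key : forall i, a i = \sum_(j < N.+1) a j * ip (u j - P j) (W i).
  move=> i.
  have -> : \sum_(j < N.+1) a j * ip (u j - P j) (W i) =
            ip (\sum_(j < N.+1) a j *: (u j - P j)) (W i).
    by rewrite ip_suml; apply: eq_bigr => j _; rewrite ipZ.
  under eq_bigr do rewrite scalerBr.
  rewrite sumrB ha subr0 ip_suml (bigD1 i) //= ipZ (hW i).1 mulr1 big1 ?addr0 //.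
  by move=> j hj; rewrite ipZ (hW i).2 ?mulr0.
have ai : forall i, `|a i| <= S * (`|W i| * Se).
  move=> i; rewrite {1}key; apply: le_trans (ler_norm_sum _ _ _) _.
  rewrite /Se mulr_sumr mulr_sumr; apply: ler_sum => j _.
  rewrite normrM.
  have hj : `|a j| <= S by rewrite /S (bigD1 j) //= lerDl sumr_ge0.
  apply: ler_pM => //.
  apply: le_trans (abs_ip _ _) _; rewrite mulrC //.
have S0 : 0 < S.
  apply: lt_le_trans (_ : `|a i0| <= S).
    by rewrite normr_gt0; apply/eqP.
  by rewrite /S (bigD1 i0) //= lerDl sumr_ge0.
have hS : S <= S * (Se * Ws).
  rewrite {1}/S /Ws mulr_sumr mulr_sumr; apply: ler_sum => i _.
  apply: le_trans (ai i) _; rewrite le_eqVlt; apply/orP; left; apply/eqP; ring.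
have h1 : 1 <= Se * Ws.
  by move: hS; rewrite -{1}[S]mulr1 ler_pM2l.
have h2 : Se <= eta * t.
  rewrite /Se /t; apply: le_trans (ler_sum _ (fun j _ => hlt j)) _.
  by rewrite sumr_const card_ord mulr_natr.
have h3 : Se * Ws <= eta * t * Ws by apply: ler_wpM2r.
have : 0 <= eta * t by apply: mulr_ge0; apply: ltW.
lra.
Qed.

End IP.

Section Compact.
Context {R : realType} {H Y : normedModType R}.

Lemma ballE (x y : H) r : ball x r y <-> `|x - y| < r.
Proof. by rewrite -ball_normE. Qed.

Lemma fin_net (K : set H) (eps : R) : compact K -> 0 < eps ->
  exists m (v : 'I_m -> H), forall u, K u -> exists i, `|v i - u| < eps.
Proof.
move=> cK e0; rewrite compact_cover in cK.
have [D' _ hD] : finite_subset_cover K (fun x => ball x eps) K.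
  apply: cK; first by move=> i _; exact: ball_open.
  by move=> u Ku; exists u => //; exact: ballxx.
set s := finmap.enum_fset D'.
exists (size s), (fun i => nth 0 s i) => u /hD [x hx /ballE hux].
have xs : x \in s by [].
have hi : (index x s < size s)%N by rewrite index_mem.
by exists (Ordinal hi) => /=; rewrite nth_index.
Qed.

Lemma fin_min (P : H -> R * R) (hP : forall x, 0 < (P x).1) (s : seq H) :
  exists d L, [/\ 0 < d, 0 <= L & forall x, x \in s -> d <= (P x).1 / 2 /\ (P x).2 <= L].
Proof.
elim: s => [|a s [d [L [d0 L0 hs]]]]; first by exists 1, 0; split.
exists (Num.min d ((P a).1 / 2)), (Num.max L (P a).2); split.
- by rewrite lt_min d0 /= divr_gt0.
- by rewrite le_max L0.
move=> x; rewrite inE => /orP [/eqP ->|/hs [h1 h2]]; split.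
- by rewrite ge_min lexx orbT.
- by rewrite le_max lexx orbT.
- by rewrite ge_min h1.
- by rewrite le_max h2.
Qed.

Lemma unif_lip (f : H -> Y) (K : set H) : locally_lipschitz f -> compact K ->
  exists d L, [/\ 0 < d, 0 <= L & forall y z, K y -> `|y - z| < d ->
     `|f y - f z| <= L * `|y - z|].
Proof.
move=> hl cK.
have hl' : forall x, exists p : R * R, 0 < p.1 /\ forall y z,
   ball x p.1 y -> ball x p.1 z -> `|f y - f z| <= p.2 * `|y - z|.
  move=> x; have [r [r0 [L hL]]] := hl x; by exists (r, L).
have [P hP] := choice hl'.
rewrite compact_cover in cK.
have [D' _ hD] : finite_subset_cover K (fun x => ball x ((P x).1 / 2)) K.
  apply: cK; first by move=> i _; exact: ball_open.
  by move=> u Ku; exists u => //; apply: ballxx; rewrite divr_gt0 // (hP u).1.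
have [d [L [d0 L0 hs]]] := fin_min (fun x => (hP x).1) (finmap.enum_fset D').
exists d, L; split => // y z Ky hyz.
have [x hx /ballE hxy] := hD y Ky.
have [h1 h2] := hs x hx.
have r0 := (hP x).1.
apply: le_trans ((hP x).2 y z _ _) _.
- by apply/ballE; lra.
- apply/ballE; have := ler_normD (x - y) (y - z); rewrite addrA subrK; lra.
- by apply: ler_wpM2r.
Qed.

End Compact.

Lemma indep_in_K {R : realType} {H : normedModType R} (K : set H) :
  (forall m (v : 'I_m -> H), ~ (K `<=` dspan v)) ->
  forall j, exists u : 'I_j -> H, lin_indep u /\ forall i, K (u i).
Proof.
move=> hB; elim => [|j [u [hu hK]]].
  by exists (fun _ => 0); split => [c _ []|[]].
have [w [Kw nw]] : exists w, K w /\ ~ dspan u w.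
  apply/not_existsP => hn; apply: (hB _ u) => w Kw.
  by apply/not_notP => nw; apply: (hn w).
exists (app u w); split; first exact: app_indep.
by move=> i; case: (ord_caseS i) => [->|[k ->]]; rewrite ?app_max ?app_wid.
Qed.

Theorem lemma4p8 (R : realType) (H : completeNormedModType R)
  (ip : H -> H -> R) (Y : completeNormedModType R)
  (f : H -> Y) (K : set H) :
  inner_product_of_norm ip ->
  (forall n : nat, exists E : set H, subspace_dim n E) ->
  locally_lipschitz f ->
  compact K ->
  exists (n0 : nat) (c : R), 0 <= c /\
    forall n : nat, (n0 <= n)%N ->
      exists E : set H, subspace_dim n E /\
        (ereal_sup [set (`|f x - f (orth_proj ip E x)|)%:E | x in K]
          <= c%:E * kolmogorov_width n K)%E.
Proof.
move=> hip hdim hl cK.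
case: (pselect (exists m (v : 'I_m -> H), K `<=` dspan v)) => [[m [v hKv]]|hB].
  exists m, 0; split => // n mn.
  have [E [[e [he ->]] hsub]] := ext hdim v mn.
  exists (dspan e); split; first by exists e.
  rewrite mul0e; apply: ge_ereal_sup => _ [x Kx <-].
  have [h1 h2] := proj_spec hip e x.
  have hx : dspan e x by apply: hsub; apply: hKv.
  have := proj_min hip h1 h2 hx; rewrite subrr normr0 => h0.
  have -> : orth_proj ip (dspan e) x = x.
    by apply/eqP; rewrite -subr_eq0 -normr_eq0 distrC eq_le h0 normr_ge0.
  by rewrite subrr normr0.
have [d [L [d0 L0 hlip]]] := unif_lip hl cK.
have d4 : 0 < d / 4 by rewrite divr_gt0.
have [m [v hnet]] := fin_net cK d4.
exists m, (2 * L); split; first by rewrite mulr_ge0.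
move=> n mn.
have hB' : forall m (v : 'I_m -> H), ~ (K `<=` dspan v) by move=> m' v' h; apply: hB; exists m', v'.
have [u [hu hKu]] := indep_in_K hB' n.+1.
have [eta [eta0 heta]] := lower_bound hip hu.
have Wlow : (eta%:E <= kolmogorov_width n K)%E.
  apply: le_ereal_inf_tmp => _ [E [e [he ->]] <-].
  have [i hi] := heta e.
  apply: le_trans (ereal_sup_ubound _); last by exists (u i).
  apply: le_ereal_inf_tmp => _ [w hw <-]; rewrite lee_fin; exact: hi.
have Wup : (kolmogorov_width n K <= (d / 4)%:E)%E.
  have [E0 [[e0 [he0 ->]] hsub]] := ext hdim v mn.
  apply: le_trans (ereal_inf_lbound _) _.
    by exists (dspan e0) => //; exists e0.
  apply: ge_ereal_sup => _ [x Kx <-].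
  have [i hi] := hnet x Kx.
  apply: le_trans (ereal_inf_lbound _) _.
    by exists (v i) => //; apply: hsub; exact: span_e.
  by rewrite lee_fin distrC ltW.
move: Wlow Wup; case hW: (kolmogorov_width n K) => [w| |] //= Wlow Wup.
rewrite lee_fin in Wlow; rewrite lee_fin in Wup.
have w0 : 0 < w by exact: lt_le_trans eta0 Wlow.
have : (kolmogorov_width n K < (2 * w)%:E)%E by rewrite hW lte_fin; lra.
rewrite /kolmogorov_width => /ereal_inf_lt [_ [E [e [he ->]] <-] hlt].
exists (dspan e); split; first by exists e.
rewrite -EFinM; apply: ge_ereal_sup => _ [x Kx <-]; rewrite lee_fin.
have hd : `|x - orth_proj ip (dspan e) x| <= 2 * w.
  rewrite -lee_fin -(dist_eq hip e x); apply: ltW; apply: le_lt_trans hlt.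
  by apply: ereal_sup_ubound; exists x.
apply: le_trans (hlip x _ Kx _) _; first lra.
nra.
Qed.
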